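(* Suppose there is $a\in\{0,1\}$, with $\neg a=1-a$, such that both of the following hold: (1) $E\{Z_i\mid A_i=a,Y_i=1\}<E\{Z_i\mid A_i=\neg a,Y_i=1\}$; (2) $E\{R_i\mid A_i=a,Y_i=1\}>E\{R_i\mid A_i=\neg a,Y_i=1\}$. Then there exists $\epsilon_o>0$ such that $\gamma(\epsilon_o)=0$, i.e. the exponential mechanism $\mathscr{A}_{\epsilon_o}$ is perfectly fair.
   Context: There are $n$ individuals indexed by $\mathcal{N}=\{1,\dots,n\}$. Individual $i$ is described by a random tuple $(X_i,A_i,Y_i)$, where $X_i\in\mathcal{X}$ are observable features, $A_i\in\{0,1\}$ is a protected attribute and $Y_i\in\{0,1\}$ is a hidden qualification state; the tuples $(X_i,A_i,Y_i)$, $i=1,\dots,n$, are i.i.d. with a common distribution $\mathsf{F}$ ($X_i$ may be correlated with $A_i$). A fixed function $r:\mathcal{X}\to\mathcal{R}$ is given, where $\mathcal{R}=\{\rho_1,\dots,\rho_{n'}\}\subset[0,1]$ is finite with $\rho_1=0$, $\rho_{n'}=1$; the qualification score of $i$ is $R_i=r(X_i)$. Conditioning events of the form $\{A_i=a,Y_i=1\}$ are assumed to have positive probability. For $\epsilon\ge 0$, the exponential mechanism $\mathscr{A}_\epsilon$, given realized scores $(r_1,\dots,r_n)$, selects individual $i$ with probability $\exp(\epsilon r_i/2)/\sum_{j=1}^n\exp(\epsilon r_j/2)$. Define the random variable $Z_{i,\epsilon}=\exp(\epsilon R_i/2)/\sum_{j=1}^n\exp(\epsilon R_j/2)$ (so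 $E\{Z_{i,\epsilon}\}$ is the probability that $\mathscr{A}_\epsilon$ selects $i$), and the fairness gap $\gamma(\epsilon)=E\{Z_{i,\epsilon}\mid A_i=0,Y_i=1\}-E\{Z_{i,\epsilon}\mid A_i=1,Y_i=1\}$ (independent of $i$). The mechanism is called perfectly fair when $\gamma(\epsilon)=0$. Let $N_{\max}=|\{i\in\mathcal{N}: R_i=\max_j R_j\}|$ and define $Z_i=0$ if $R_i\ne\max_j R_j$ and $Z_i=1/N_{\max}$ otherwise; $E\{Z_i\}$ is the probability that the non-private algorithm $\mathscr{A}$, which selects uniformly at random among the individuals with the highest score, selects $i$. *)

(* Defs.v *)
From HB Require Import structures.
From mathcomp Require Import all_boot all_order all_algebra.
From mathcomp Require Import all_classical all_reals all_analysis.
Set Implicit Arguments. Unset Strict Implicit. Unset Printing Implicit Defensive.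
Import Order.TTheory GRing.Theory Num.Theory.
Local Open Scope classical_set_scope.
Local Open Scope ring_scope.

Definition prob {d} {T : measurableType d} {R : realType}
  (P : probability T R) (E : set T) : R := fine (P E).

Definition cond_expect {d} {T : measurableType d} {R : realType}
  (P : probability T R) (f : T -> R) (E : set T) : R :=
  fine (\int[P]_(w in E) (f w)%:E) / prob P E.

Definition iid {d} {T : measurableType d} {R : realType} {dU}
  {U : measurableType dU} (n : nat) (P : probability T R) (V : 'I_n -> T -> U) : Prop :=
  (forall i j (B : set U), measurable B ->
      P (V i @^-1` B) = P (V j @^-1` B)) /\
  (forall B : 'I_n -> set U, (forall i, measurable (B i)) ->
      prob P (\bigcap_(i in [set: 'I_n]) (V i @^-1` B i))
      = \prod_(i < n) prob P (V i @^-1` B i)).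

(* Z_{i,eps}: selection probability of i by the exponential mechanism,
   given the realized scores RR. *)
Definition Zexp {R : realType} (n : nat) (eps : R) (RR : 'I_n -> R) (i : 'I_n) : R :=
  expR (eps * RR i / 2) / \sum_(j < n) expR (eps * RR j / 2).

(* Z_i: selection probability of i by the non-private algorithm (uniform
   among the maximisers of the score). *)
Definition Zmax {R : realType} (n : nat) (RR : 'I_n -> R) (i : 'I_n) : R :=
  let M := \big[Num.max/RR i]_(j < n) RR j in
  if RR i == M then (#|[set j | RR j == M]|%:R)^-1 else 0.

(* Main.v *)
Require Import Defs.
From HB Require Import structures.
From mathcomp Require Import all_boot all_order all_algebra.
From mathcomp Require Import all_classical all_reals all_analysis.
From mathcomp Require Import ring lra.
Import Order.TTheory GRing.Theory Num.Theory.
Import numFieldNormedType.Exports.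
Local Open Scope classical_set_scope.
Local Open Scope ring_scope.
Section RealPart.
Variable R : realType.

Lemma is_derive_lin (k x : R) : is_derive x 1 (fun e : R => e * k) k.
Proof.
have E : (fun e : R => e * k) = k *: (@id R) by apply/funext => e /=; rewrite mulrC.
rewrite E; apply: is_derive_eq.
exact: mulr1.
Qed.

Lemma is_derive_expM (k x : R) :
  is_derive x 1 (fun e : R => expR (e * k)) (expR (x * k) * k).
Proof.
exact: (@is_derive1_comp R expR (fun e => e * k) x _ _ (is_derive_expR _) (is_derive_lin k x)).
Qed.

Lemma is_derive_scal (k x df : R) (f : R -> R) :
  is_derive x 1 f df -> is_derive x 1 (fun e => k * f e) (k * df).
Proof.
move=> H; have E : (fun e : R => k * f e) = k *: f by apply/funext => e.
by rewrite E; apply: is_derive_eq.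
Qed.

Lemma is_derive_sumT (T : finType) (F : T -> R -> R) (dF : T -> R) (x : R) :
  (forall t, is_derive x 1 (F t) (dF t)) ->
  is_derive x 1 (fun e => \sum_t F t e) (\sum_t dF t).
Proof.
move=> H; rewrite /index_enum; elim: (Finite.enum T) => [|t s IH].
  have -> : (fun e : R => \sum_(t <- [::]) F t e) = cst 0.
    by apply/funext => e; rewrite big_nil.
  rewrite big_nil; exact: is_derive_cst.
have -> : (fun e : R => \sum_(t0 <- t :: s) F t0 e) =
   F t + (fun e : R => \sum_(t0 <- s) F t0 e).
  by apply/funext => e; rewrite big_cons.
rewrite big_cons; exact: is_deriveD.
Qed.

Definition gZ {n : nat} (v : 'I_n -> R) (j : 'I_n) (e : R) := expR (e * (v j / 2)).
Definition hZ {n : nat} (v : 'I_n -> R) (e : R) := \sum_j expR (e * (v j / 2)).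
Definition dZ {n : nat} (v : 'I_n -> R) (i : 'I_n) (x : R) :=
  gZ v i x * (- (hZ v x) ^- 2 * (\sum_j expR (x * (v j / 2)) * (v j / 2)))
  + (hZ v x)^-1 * (expR (x * (v i / 2)) * (v i / 2)).

Lemma hZ_gt0 {n : nat} (v : 'I_n -> R) (i : 'I_n) x : 0 < hZ v x.
Proof.
rewrite /hZ (bigD1 i) //=; apply: ltr_pwDl; first exact: expR_gt0.
by apply: sumr_ge0 => j _; exact: expR_ge0.
Qed.

Lemma ZexpE {n : nat} (v : 'I_n -> R) (i : 'I_n) e : Zexp e v i = gZ v i e / hZ v e.
Proof.
rewrite /Zexp /gZ /hZ mulrA; congr (_ / _); apply: eq_bigr => j _; by rewrite mulrA.
Qed.

Lemma is_derive_Zexp {n : nat} (v : 'I_n -> R) (i : 'I_n) x :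
  is_derive x (1 : R) (fun e : R => Zexp e v i) (dZ v i x).
Proof.
have Hg := is_derive_expM (v i / 2) x.
have Hh : is_derive x 1 (hZ v) (\sum_j expR (x * (v j / 2)) * (v j / 2)).
  apply: (@is_derive_sumT _ (fun j e => expR (e * (v j / 2)))) => j; exact: is_derive_expM.
have Hhinv := is_deriveV (lt0r_neq0 (hZ_gt0 v i x)) Hh.
have HM := is_deriveM Hg Hhinv.
have E : (fun e => Zexp e v i) = (fun e => gZ v i e * (hZ v e)^-1).
  by apply/funext => e; rewrite ZexpE.
rewrite E; apply: is_derive_eq.
by rewrite /dZ /gZ.
Qed.
Lemma deriv_pos (G : R -> R) (d : R) :
  is_derive (0 : R) (1 : R) G d -> 0 < d -> G 0 = 0 -> exists e, 0 < e /\ 0 < G e.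
Proof.
move=> /is_derive1_caratheodory [g [gE gc g0]] d0 G0.
have : \forall z \near (0:R), 0 < g z.
  by have := @cvgr_gt _ _ _ _ g (g 0) gc 0; rewrite g0; apply.
move=> /nbhs_ballP [e /= e0 He].
have e20 : 0 < e / 2 by rewrite divr_gt0.
exists (e / 2); split => //.
have gpos : 0 < g (e / 2).
  apply: He; rewrite /ball /= sub0r normrN gtr0_norm //.
  by rewrite ltr_pdivrMr // ltr_pMr // ltr1n.
by have := gE (e / 2); rewrite G0 subr0 subr0 => ->; rewrite mulr_gt0.
Qed.
Lemma n_gt0 {n : nat} (i : 'I_n) : (0 < n)%N.
Proof. exact: (leq_ltn_trans (leq0n _) (ltn_ord i)). Qed.

Lemma dZ0 {n : nat} (v : 'I_n -> R) (i : 'I_n) :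
  dZ v i 0 = (n%:R * v i - \sum_j v j) / (2 * n%:R ^+ 2).
Proof.
have n0 : n%:R != 0 :> R by rewrite pnatr_eq0 -lt0n (n_gt0 i).
rewrite /dZ /gZ /hZ mul0r expR0.
under eq_bigr do rewrite mul0r expR0.
rewrite sumr_const card_ord.
rewrite (eq_bigr (fun j => v j / 2)); last by move=> j _; rewrite mul0r expR0 mul1r.
rewrite -mulr_suml.
by field.
Qed.

Lemma is_derive_G (T : finType) {n : nat} (i : 'I_n) (vec : T -> 'I_n -> R) (c : T -> R) x :
  is_derive x (1 : R) (fun e : R => \sum_t c t * Zexp e (vec t) i)
     (\sum_t c t * dZ (vec t) i x).
Proof.
apply: (@is_derive_sumT _ (fun t e => c t * Zexp e (vec t) i)) => t.
apply: is_derive_scal; exact: is_derive_Zexp.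
Qed.

Lemma G_cont (T : finType) {n : nat} (i : 'I_n) (vec : T -> 'I_n -> R) (c : T -> R) :
  continuous (fun e : R => \sum_t c t * Zexp e (vec t) i).
Proof.
move=> x; have [Hd _] := is_derive_G T i vec c x.
exact/differentiable_continuous/derivable1_diffP.
Qed.

Lemma expR_lim (k : R) : k < 0 -> expR (e * k) @[e --> +oo] --> (0 : R).
Proof.
move=> k0; apply/cvgrPdist_le => eps eps0; near=> e.
have he : (eps^-1 - 1) / (- k) <= e by near: e; apply: nbhs_pinfty_ge; rewrite num_real.
rewrite ler_pdivrMr ?oppr_gt0 // mulrN in he.
have ieps : 0 < eps^-1 by rewrite invr_gt0.
have h1 : 0 < 1 - e * k by lra.
rewrite sub0r normrN ger0_norm ?expR_ge0 //.
rewrite -[e * k]opprK expRN.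
apply: (@le_trans _ _ ((1 - e * k)^-1)).
  rewrite lef_pV2 ?posrE ?expR_gt0 //; exact: expR_ge1Dx.
rewrite invf_ple ?posrE //; lra.
Unshelve. all: by end_near.
Qed.

Lemma cvg_sumT (T : finType) (F : T -> R -> R) (l : T -> R) :
  (forall t, F t e @[e --> +oo] --> l t) ->
  \sum_t F t e @[e --> +oo] --> \sum_t l t.
Proof.
move=> H; rewrite /index_enum; elim: (Finite.enum T) => [|t s IH].
  under eq_fun do rewrite big_nil.
  rewrite big_nil; exact: cvg_cst.
under eq_fun do rewrite big_cons.
rewrite big_cons; exact: cvgD.
Qed.

Lemma expR_lim' (k : R) : k <= 0 ->
  expR (e * k) @[e --> +oo] --> (if k == 0 then 1 else 0 : R).
Proof.
rewrite le_eqVlt => /orP [/eqP -> | k0].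
  rewrite eqxx; under eq_fun do rewrite mulr0 expR0; exact: cvg_cst.
by rewrite (lt_eqF k0); exact: expR_lim.
Qed.

Lemma Zexp_lim {n : nat} (v : 'I_n -> R) (i : 'I_n) :
  Zexp e v i @[e --> +oo] --> Zmax v i.
Proof.
set M := \big[Num.max/v i]_(j < n) v j.
have vM : forall j, v j <= M.
  by move=> j; apply: le_bigmax_seq => //; rewrite mem_index_enum.
have [j0 Mj0] : exists j0, M = v j0.
  rewrite /M /index_enum; elim: (Finite.enum _) => [|a s [j0 IH]].
    by exists i; rewrite big_nil.
  rewrite big_cons IH; case: (leP (v a) (v j0)) => h.
    by exists j0.
  by exists a.
have E : forall e, Zexp e v i =
    expR (e * ((v i - M) / 2)) / \sum_j expR (e * ((v j - M) / 2)).
  move=> e; rewrite /Zexp.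
  have -> : \sum_j expR (e * ((v j - M) / 2)) =
            (\sum_j expR (e * v j / 2)) * expR (- (e * M / 2)).
    rewrite mulr_suml; apply: eq_bigr => j _; rewrite -expRD; congr expR.
    by ring.
  have -> : expR (e * ((v i - M) / 2)) = expR (e * v i / 2) * expR (- (e * M / 2)).
    by rewrite -expRD; congr expR; ring.
  have h1 : expR (- (e * M / 2)) != 0 by rewrite gt_eqF ?expR_gt0.
  have h2 : \sum_j expR (e * v j / 2) != 0.
    rewrite gt_eqF // (bigD1 i) //=; apply: ltr_pwDl; first exact: expR_gt0.
    by apply: sumr_ge0 => j _; exact: expR_ge0.
  by rewrite invfM mulrACA divff // mulr1.
under eq_fun do rewrite E.
have Hl : forall j, expR (e * ((v j - M) / 2)) @[e --> +oo] -->
    (if v j == M then 1 else 0 : R).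
  move=> j; have := @expR_lim' ((v j - M) / 2).
  have -> : ((v j - M) / 2 == 0) = (v j == M).
    by rewrite mulf_eq0 invr_eq0 pnatr_eq0 orbF subr_eq0.
  apply; rewrite pmulr_lle0 ?invr_gt0 ?ltr0n // subr_le0; exact: vM.
have Hs := @cvg_sumT _ (fun j e => expR (e * ((v j - M) / 2))) _ Hl.
have Hpos : 0 < \sum_j (if v j == M then 1 else 0 : R).
  rewrite (bigD1 j0) //= -Mj0 eqxx; apply: ltr_pwDl => //.
  by apply: sumr_ge0 => j _; case: ifP.
have H := cvgM (Hl i) (cvgV (lt0r_neq0 Hpos) Hs).
have -> : Zmax v i = (if v i == M then 1 else 0) *
    (\sum_j (if v j == M then 1 else 0 : R))^-1.
  rewrite /Zmax -/M -big_mkcond /= sumr_const.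
  case: ifP => _; last by rewrite mul0r.
  by rewrite mul1r; congr (_%:R^-1); apply: eq_card => j; rewrite unfold_in /= asboolb.
exact: H.
Qed.

Lemma real_part (T : finType) {n : nat} (i : 'I_n) (vec : T -> 'I_n -> R) (c : T -> R) :
  \sum_t c t = 0 ->
  \sum_t c t * Zmax (vec t) i < 0 ->
  0 < \sum_t c t * (n%:R * vec t i - \sum_j vec t j) ->
  exists eps : R, 0 < eps /\ \sum_t c t * Zexp eps (vec t) i = 0.
Proof.
move=> c0 Hmax Hder.
pose G := fun e : R => \sum_t c t * Zexp e (vec t) i.
have npos : 0 < n%:R :> R by rewrite ltr0n (n_gt0 i).
have G0 : G 0 = 0.
  rewrite /G (eq_bigr (fun t => c t * n%:R^-1)); last first.
    move=> t _; rewrite /Zexp !mul0r expR0.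
    under eq_bigr do rewrite !mul0r expR0.
    by rewrite sumr_const card_ord div1r.
  by rewrite -mulr_suml c0 mul0r.
have [e1 [e1p Ge1]] : exists e, 0 < e /\ 0 < G e.
  apply: (@deriv_pos G _ (is_derive_G T i vec c 0)); last exact: G0.
  under eq_bigr do rewrite dZ0 mulrA.
  rewrite -mulr_suml; apply: divr_gt0 => //.
  by rewrite mulr_gt0 // exprn_gt0.
have Glim : G e @[e --> +oo] --> \sum_t c t * Zmax (vec t) i.
  apply: (@cvg_sumT _ (fun t e => c t * Zexp e (vec t) i)) => t.
  exact: cvgMr (Zexp_lim _ _).
have := cvgr_lt _ Glim 0 Hmax.
move=> [M [Mreal HM]].
pose e2 := Num.max e1 M + 1.
have e2M : M < e2 by rewrite /e2 ltr_pwDr ?ltr01 // le_max lexx orbT.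
have e12 : e1 <= e2 by rewrite /e2 ler_wpDr ?ler01 // le_max lexx.
have Ge2 := HM _ e2M.
have [x xin Gx] : exists2 x, x \in `[e1, e2] & G x = 0.
  apply: IVT => //.
    apply/continuous_subspaceT => x; exact: G_cont.
  rewrite ge_min le_max (ltW Ge1) (ltW Ge2) orbT. done.
exists x; split => //.
move: xin; rewrite in_itv /= => /andP [h1 _]; exact: lt_le_trans h1.
Qed.

Lemma Zmax_ge0 {n : nat} (v : 'I_n -> R) (i : 'I_n) : 0 <= Zmax v i.
Proof. by rewrite /Zmax /=; case: ifP => // _; rewrite invr_ge0 ler0n. Qed.

Lemma Zexp_ge0 {n : nat} (e : R) (v : 'I_n -> R) (i : 'I_n) : 0 <= Zexp e v i.
Proof.
rewrite /Zexp; apply: divr_ge0; first exact: expR_ge0.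
by apply: sumr_ge0 => j _; exact: expR_ge0.
Qed.

Lemma Zmax_n1 {n : nat} (v : 'I_n -> R) (i : 'I_n) : n = 1%N -> Zmax v i = 1.
Proof.
move=> n1; move: v i; rewrite n1 => v i; rewrite (ord1 i) /Zmax /=.
rewrite big_ord_recl big_ord0 maxxx eqxx.
rewrite (@eq_card _ _ 'I_1) ?card_ord ?invr1 // => j.
by rewrite unfold_in /= asboolb (ord1 j) eqxx.
Qed.

End RealPart.
Section Prob.
Context {R : realType} {d : measure_display} {Omega : measurableType d}
  {P : probability Omega R}.

Lemma prob_fin (E : set Omega) : measurable E -> (P E)%E = (prob P E)%:E.
Proof. by move=> mE; rewrite /prob fineK //; exact: fin_num_measure. Qed.

Lemma int_fin (T : finType) (E : set Omega) (S : Omega -> T) (h : T -> R) :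
  measurable E -> (forall t, measurable (S @^-1` [set t])) -> (forall t, 0 <= h t) ->
  fine (\int[P]_(w in E) (h (S w))%:E) =
  \sum_(t : T) h t * prob P (E `&` S @^-1` [set t]).
Proof.
move=> mE mS h0.
have -> : (fun w => (h (S w))%:E) =
   (fun w => \sum_(t : T) (h t * \1_(S @^-1` [set t]) w)%:E)%E.
  apply/funext => w; rewrite sumEFin (bigD1 (S w)) //= indicE mem_set // mulr1.
  rewrite big1 ?addr0 // => t /negPf tS; rewrite indicE memNset ?mulr0 //.
  by move=> /= Ht; rewrite Ht eqxx in tS.
rewrite ge0_integral_sum //; last first.
- by move=> t w _; rewrite lee_fin mulr_ge0.
- move=> t; apply/measurable_realfun.measurable_EFinP; apply: measurable_realfun.measurable_funM => //.
rewrite (eq_bigr (fun t => (h t * prob P (E `&` S @^-1` [set t]))%:E)%E).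
  by rewrite sumEFin.
move=> t _.
rewrite (@integralZl_indic _ _ _ _ _ mE (fun _ => S @^-1` [set t])) //; last first.
  by move=> /lt_geF; rewrite h0.
rewrite integral_indic // setIC /prob EFinM fineK //; apply: fin_num_measure; exact: measurableI.
Qed.

Lemma cond_fin (T : finType) (E : set Omega) (S : Omega -> T) (h : T -> R) :
  measurable E -> (forall t, measurable (S @^-1` [set t])) -> (forall t, 0 <= h t) ->
  cond_expect P (fun w => h (S w)) E =
  \sum_(t : T) h t * (prob P (E `&` S @^-1` [set t]) / prob P E).
Proof.
move=> mE mS h0; rewrite /cond_expect int_fin // mulr_suml.
by apply: eq_bigr => t _; rewrite mulrA.
Qed.

Lemma cond_one (E : set Omega) : measurable E -> 0 < prob P E ->
  cond_expect P (fun _ => 1) E = 1.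
Proof.
move=> mE pE; rewrite /cond_expect.
have -> : (fun _ : Omega => (1:R)%:E) = cst 1%:E by [].
by rewrite integral_cst // mul1e -/(prob P E) divff // gt_eqF.
Qed.

Context {dX : measure_display} {Xsp : measurableType dX} {n : nat}
  {X : 'I_n -> Omega -> Xsp} {A Y : 'I_n -> Omega -> bool} {r : Xsp -> R}.
Hypotheses (mX : forall j, measurable_fun setT (X j))
  (mA : forall j, measurable_fun setT (A j))
  (mY : forall j, measurable_fun setT (Y j))
  (mr : measurable_fun setT r).


Lemma mEb i b : measurable [set w | A i w = b /\ Y i w = true].
Proof.
have h1 : measurable (setT `&` A i @^-1` [set b]) by apply: mA.
have h2 : measurable (setT `&` Y i @^-1` [set true]) by apply: mY.
rewrite setTI in h1; rewrite setTI in h2.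
exact: (measurableI _ _ h1 h2).
Qed.

Lemma mRj j x : measurable [set w | r (X j w) = x].
Proof.
have : measurable (setT `&` (r \o X j) @^-1` [set x]).
  have mc := measurableT_comp mr (mX j).
  by apply: mc => //; exact: measurable_set1.
by rewrite setTI.
Qed.

Lemma mrx x : measurable (r @^-1` [set x]).
Proof.
have : measurable (setT `&` r @^-1` [set x]) by apply: mr => //; exact: measurable_set1.
by rewrite setTI.
Qed.

Lemma indep (Hiid : iid P (fun j w => (X j w, A j w, Y j w))) (i j : 'I_n) (b : bool) (x : R) :
  j != i ->
  prob P ([set w | A i w = b /\ Y i w = true] `&` [set w | r (X j w) = x]) =
  prob P ([set w | A i w = b /\ Y i w = true]) * prob P [set w | r (X j w) = x].
Proof.
move=> ji; case: Hiid => _ Hind.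
pose B k : set (Xsp * bool * bool) :=
  if k == i then (setT `*` [set b]) `*` [set true]
  else if k == j then (r @^-1` [set x] `*` setT) `*` setT else setT.
have mB : forall k, measurable (B k).
  move=> k; rewrite /B; case: ifP => _.
    by apply: measurableX => //; apply: measurableX.
  case: ifP => _ //.
  apply: measurableX => //; apply: measurableX => //; exact: mrx.
have := Hind B mB.
have -> : \bigcap_(k in [set: 'I_n]) ((fun w => (X k w, A k w, Y k w)) @^-1` B k) =
    [set w | A i w = b /\ Y i w = true] `&` [set w | r (X j w) = x].
  apply/seteqP; split => w /=.
    move=> H; have Hi := H i I; have Hj := H j I.
    rewrite /B eqxx /= in Hi; rewrite /B (negPf ji) eqxx /= in Hj.
    by move: Hi Hj => [[_ Ha] Hy] [[Hr _] _]; split => //; split.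
  move=> [[Ha Hy] Hr] k _; rewrite /B; case: eqP => [->|_] /=; first by [].
  by case: eqP => [->|_].
move=> ->; rewrite (bigD1 i) //= (bigD1 j) //= big1 ?mulr1; last first.
  move=> k /andP [ki kj]; rewrite /B (negPf ki) (negPf kj) preimage_setT.
  by rewrite /prob probability_setT.
rewrite /B eqxx (negPf ji) eqxx.
congr (prob P _ * prob P _); apply/seteqP; split => w /=.
- by case=> [[_ Ha] Hy]; split.
- by case=> Ha Hy.
- by case=> [[-> _] _].
- by move=> ->.
Qed.

Lemma cond_Rj {rho : seq R} (hr : forall x, r x \in rho)
  (hrho : all (fun p => (0 <= p) && (p <= 1)) rho)
  (Hiid : iid P (fun j w => (X j w, A j w, Y j w))) (i j : 'I_n) (b : bool) :
  j != i -> 0 < prob P [set w | A i w = b /\ Y i w = true] ->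
  cond_expect P (fun w => r (X j w)) [set w | A i w = b /\ Y i w = true] =
  \sum_(x : seq_sub rho) ssval x * prob P [set w | r (X j w) = ssval x].
Proof.
move=> ji pE.
pose S' w : seq_sub rho := SeqSub (hr (X j w)).
have S'E : forall x, S' @^-1` [set x] = [set w | r (X j w) = ssval x].
  move=> x; apply/seteqP; split => w /=; first by move=> <-.
  by move=> H; apply/val_inj.
have -> : (fun w => r (X j w)) = (fun w => ssval (S' w)) by [].
rewrite cond_fin //; last first.
- by move=> x; have := allP hrho _ (ssvalP x); case/andP.
- by move=> x; rewrite S'E; exact: mRj.
- exact: mEb.
apply: eq_bigr => x _; rewrite S'E indep // mulrAC divff ?mul1r //.
exact: lt0r_neq0.
Qed.

End Prob.

Theorem theorem1
  (R : realType) (d : measure_display) (Omega : measurableType d)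
  (P : probability Omega R)
  (dX : measure_display) (Xsp : measurableType dX)
  (n : nat) (X : 'I_n -> Omega -> Xsp) (A Y : 'I_n -> Omega -> bool)
  (r : Xsp -> R) (rho : seq R) :
  (* the features, attribute and qualification are random variables *)
  (forall j, measurable_fun setT (X j)) ->
  (forall j, measurable_fun setT (A j)) ->
  (forall j, measurable_fun setT (Y j)) ->
  (* the tuples (X_j, A_j, Y_j) are i.i.d. *)
  iid P (fun j w => (X j w, A j w, Y j w)) ->
  (* r is a (measurable) score function with finite range rho in [0,1],
     containing 0 and 1 *)
  measurable_fun setT r ->
  (forall x, r x \in rho) ->
  all (fun p => (0 <= p) && (p <= 1)) rho ->
  (0 : R) \in rho -> (1 : R) \in rho ->
  (* conditioning events have positive probability *)
  (forall j (b : bool), 0 < prob P [set w | A j w = b /\ Y j w = true]) ->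
  forall (i : 'I_n) (a : bool),
  (* (1) *)
  cond_expect P (fun w => Zmax (fun j => r (X j w)) i)
      [set w | A i w = a /\ Y i w = true]
  < cond_expect P (fun w => Zmax (fun j => r (X j w)) i)
      [set w | A i w = ~~ a /\ Y i w = true] ->
  (* (2) *)
  cond_expect P (fun w => r (X i w)) [set w | A i w = a /\ Y i w = true]
  > cond_expect P (fun w => r (X i w)) [set w | A i w = ~~ a /\ Y i w = true] ->
  exists eps : R, 0 < eps /\
    cond_expect P (fun w => Zexp eps (fun j => r (X j w)) i)
        [set w | A i w = false /\ Y i w = true]
    - cond_expect P (fun w => Zexp eps (fun j => r (X j w)) i)
        [set w | A i w = true /\ Y i w = true] = 0.
Proof.
move=> mX mA mY Hiid mr hr hrho _ _ Hpos i a H1 H2.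
pose T := {ffun 'I_n -> seq_sub rho}.
pose S : Omega -> T := fun w => [ffun j => SeqSub (hr (X j w))].
pose vec : T -> 'I_n -> R := fun t j => ssval (t j).
have Svec : forall w, vec (S w) = (fun j => r (X j w)).
  by move=> w; apply/funext => j; rewrite /vec /S ffunE.
have mS : forall t, measurable (S @^-1` [set t]).
  move=> t; have -> : S @^-1` [set t] =
      \bigcap_(j in [set: 'I_n]) [set w | r (X j w) = ssval (t j)].
    apply/seteqP; split => w /=.
      by move=> <- j _; rewrite /S ffunE.
    by move=> H; apply/ffunP => j; rewrite ffunE; apply/val_inj; exact: H.
  apply: fin_bigcap_measurable; first exact: finite_finset.
  by move=> j _; exact: (mRj mX mr).
have vec0 : forall t j, 0 <= vec t j.
  by move=> t j; have := allP hrho _ (ssvalP (t j)); case/andP.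
pose E b := [set w | A i w = b /\ Y i w = true].
have mE : forall b, measurable (E b) by move=> b; exact: (mEb mA mY).
pose c t := prob P (E a `&` S @^-1` [set t]) / prob P (E a)
          - prob P (E (~~ a) `&` S @^-1` [set t]) / prob P (E (~~ a)).
have key : forall (h : T -> R) (f : Omega -> R), (forall t, 0 <= h t) ->
    (forall w, f w = h (S w)) ->
    cond_expect P f (E a) - cond_expect P f (E (~~ a)) = \sum_t c t * h t.
  move=> h f h0 fE; have -> : f = (fun w => h (S w)) by apply/funext.
  rewrite !(cond_fin T) // -sumrB; apply: eq_bigr => t _; rewrite /c; ring.
have csum : \sum_t c t = 0.
  have := key (fun _ => 1) (fun _ => 1) (fun _ => ler01) (fun _ => erefl).
  rewrite (cond_one _ (mE a) (Hpos i a)) (cond_one _ (mE (~~ a)) (Hpos i (~~ a))) subrr => H.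
  by rewrite (eq_bigr (fun t => c t * 1)) -?H // => t _; rewrite mulr1.
have Hmax : \sum_t c t * Zmax (vec t) i < 0.
  rewrite -(key (fun t => Zmax (vec t) i) (fun w => Zmax (fun j => r (X j w)) i)).
  - by rewrite subr_lt0.
  - by move=> t; exact: Zmax_ge0.
  - by move=> w; rewrite Svec.
have Hi : 0 < \sum_t c t * vec t i.
  rewrite -(key (fun t => vec t i) (fun w => r (X i w))).
  - by rewrite subr_gt0.
  - by move=> t; exact: vec0.
  - by move=> w; rewrite Svec.
have F4 : forall j, j != i -> \sum_t c t * vec t j = 0.
  move=> j ji.
  rewrite -(key (fun t => vec t j) (fun w => r (X j w))).
  - by rewrite !(cond_Rj mX mA mY mr hr hrho Hiid) // subrr.
  - by move=> t; exact: vec0.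
  - by move=> w; rewrite Svec.
have n2 : (1 < n)%N.
  rewrite ltnNge; apply/negP => n1.
  have n1' : n = 1%N by apply/eqP; rewrite eqn_leq n1 (n_gt0 i).
  move: Hmax; rewrite (eq_bigr (fun t => c t)) ?csum ?ltxx // => t _.
  by rewrite Zmax_n1 // mulr1.
have Hder : 0 < \sum_t c t * (n%:R * vec t i - \sum_j vec t j).
  rewrite (eq_bigr (fun t => n%:R * (c t * vec t i) - \sum_j c t * vec t j)); last first.
    by move=> t _; rewrite mulrBr mulr_sumr mulrCA.
  rewrite sumrB -mulr_sumr [X in _ - X]exchange_big /= [X in _ - X](bigD1 i) //=.
  rewrite [X in _ - (_ + X)]big1 ?addr0; last first.
    by move=> j ji; exact: F4.
  rewrite -{2}[\sum_t c t * vec t i]mul1r -mulrBl mulr_gt0 // subr_gt0 ltr1n //.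
have [eps [eps0 Heps]] := @real_part R T n i vec c csum Hmax Hder.
exists eps; split => //.
have := key (fun t => Zexp eps (vec t) i) (fun w => Zexp eps (fun j => r (X j w)) i).
rewrite Heps; move=> Hz.
have {}Hz := Hz (fun t => Zexp_ge0 _ _ _ _) (fun w => congr1 (fun v => Zexp eps v i) (esym (Svec w))).
move: Hz; rewrite /E; case: (a) => /= Hz; last exact: Hz.
by rewrite -opprB Hz oppr0.
Qed.
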